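(* Let $(\Delta x,\Delta y)\in\mathbb{R}^2$, $(o_x,o_y)\in\mathbb{R}^2$, $(x_0,y_0,\theta_0)\in\mathbb{R}^3$, $R>0$ and $t_{\max}>0$. Consider the forward right-turning arc robot path $$x(t)=x_0+R\sin\theta_0-R\sin(\theta_0-t),\quad y(t)=y_0-R\cos\theta_0+R\cos(\theta_0-t),\quad \theta(t)=\theta_0-t,\qquad t\in(0,t_{\max}),$$ (an arc of radius $R$ with centre angle $t_{\max}$), and let the anchoring point have world coordinates $\tilde x(t)=x(t)+\cos\theta(t)\Delta x-\sin\theta(t)\Delta y$, $\tilde y(t)=y(t)+\sin\theta(t)\Delta x+\cos\theta(t)\Delta y$, assumed different from $(o_x,o_y)$ for all $t$. Define $$A=o_x-x_0-R\sin\theta_0,\quad B=o_y-y_0+R\cos\theta_0,\quad C=A\Delta x+BR+B\Delta y,\quad D=AR+A\Delta y-B\Delta x,$$ assume $(C,D)\neq(0,0)$, and let $\varphi$ be the angle with $\cos\varphi=\frac{C}{\sqrt{C^2+D^2}}$, $\sin\varphi=\frac{D}{\sqrt{C^2+D^2}}$. If either $$\frac{A^2+B^2}{\sqrt{C^2+D^2}}>\cos(t-\theta_0-\varphi)\ \text{ for all } t\in(0,t_{\max}),$$ or $$\frac{A^2+B^2}{\sqrt{C^2+D^2}}<\cos(t-\theta_0-\varphi)\ \text{ for all } t\in(0,t_{\max}),$$ then the relative angle function $\Phi(t)=\arctan\left(\frac{o_y-\tilde y(t)}{o_x-\tilde x(t)}\right)-\theta(t)$ is monotonic on $(0,t_{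\max})$.
   Context: $(\Delta x,\Delta y)$ is the position of the tether–robot anchoring point $s$ in the robot's egocentric frame, and $(o_x,o_y)$ is the (fixed) position of the last tether–obstacle contact point $o$ in the world frame. In $\Phi$, $\arctan\left(\frac{o_y-\tilde y}{o_x-\tilde x}\right)$ denotes the direction angle of the vector from $(\tilde x,\tilde y)$ to $(o_x,o_y)$, taken as a continuous (differentiable) branch along the path. *)

(* Defs.v *)
From Stdlib Require Import Reals.
Open Scope R_scope.

Definition path_x (x0 th0 Rr t : R) : R := x0 + Rr * sin th0 - Rr * sin (th0 - t).
Definition path_y (y0 th0 Rr t : R) : R := y0 - Rr * cos th0 + Rr * cos (th0 - t).
Definition path_th (th0 t : R) : R := th0 - t.

Definition anchor_x (x0 th0 Rr dx dy t : R) : R :=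
  path_x x0 th0 Rr t + cos (path_th th0 t) * dx - sin (path_th th0 t) * dy.
Definition anchor_y (y0 th0 Rr dx dy t : R) : R :=
  path_y y0 th0 Rr t + sin (path_th th0 t) * dx + cos (path_th th0 t) * dy.

Definition angle_branch (vx vy alpha : R -> R) (a b : R) : Prop :=
  forall t, a < t < b ->
    continuity_pt alpha t /\
    cos (alpha t) = vx t / sqrt (vx t ^ 2 + vy t ^ 2) /\
    sin (alpha t) = vy t / sqrt (vx t ^ 2 + vy t ^ 2).

Definition monotonic_on (f : R -> R) (a b : R) : Prop :=
  (forall s t, a < s -> s <= t -> t < b -> f s <= f t) \/
  (forall s t, a < s -> s <= t -> t < b -> f t <= f s).

(* Main.v *)
Require Import Defs.
From Coquelicot Require Import Coquelicot.
From Stdlib Require Import Reals Lra.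
Open Scope R_scope.

Definition VX ox x0 th0 Rr dx dy s := ox - anchor_x x0 th0 Rr dx dy s.
Definition VY oy y0 th0 Rr dx dy s := oy - anchor_y y0 th0 Rr dx dy s.

Lemma der_vx ox oy x0 y0 th0 Rr dx dy s :
  is_derive (VX ox x0 th0 Rr dx dy) s
    (VY oy y0 th0 Rr dx dy s - (oy - y0 + Rr * cos th0)).
Proof.
  unfold VX, VY, anchor_x, anchor_y, path_x, path_y, path_th.
  auto_derive; auto. unfold Rminus; ring.
Qed.

Lemma der_vy ox oy x0 y0 th0 Rr dx dy s :
  is_derive (VY oy y0 th0 Rr dx dy) s
    ((ox - x0 - Rr * sin th0) - VX ox x0 th0 Rr dx dy s).
Proof.
  unfold VX, VY, anchor_x, anchor_y, path_x, path_y, path_th.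
  auto_derive; auto. unfold Rminus; ring.
Qed.

Lemma deq (f : R -> R) (x l l' : R) : is_derive f x l -> l = l' -> is_derive f x l'.
Proof. intros H ->; exact H. Qed.

Lemma is_derive_plus' (f g : R -> R) x df dg : is_derive f x df -> is_derive g x dg ->
  is_derive (fun s => f s + g s) x (df + dg).
Proof. intros; apply (is_derive_plus f g); auto. Qed.

Lemma is_derive_minus' (f g : R -> R) x df dg : is_derive f x df -> is_derive g x dg ->
  is_derive (fun s => f s - g s) x (df - dg).
Proof. intros; apply (is_derive_minus f g); auto. Qed.

Lemma dmulc (f : R -> R) x df c : is_derive f x df -> is_derive (fun s => f s * c) x (df * c).
Proof.
  intro H. apply is_derive_Reals. apply is_derive_Reals in H.
  apply (derivable_pt_lim_ext (mult_real_fct c f)). { intro; unfold mult_real_fct; ring. }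
  replace (df * c) with (c * df) by ring. apply derivable_pt_lim_scal. exact H.
Qed.

Lemma der_alpha (vx vy : R -> R) (a b : R) (alpha : R -> R) (t dvx dvy : R) :
  a < t < b ->
  (forall s, a < s < b -> vx s ^ 2 + vy s ^ 2 > 0) ->
  (forall s, a < s < b ->
    cos (alpha s) = vx s / sqrt (vx s ^ 2 + vy s ^ 2) /\
    sin (alpha s) = vy s / sqrt (vx s ^ 2 + vy s ^ 2)) ->
  continuity_pt alpha t ->
  is_derive vx t dvx -> is_derive vy t dvy ->
  is_derive alpha t ((vx t * dvy - vy t * dvx) / (vx t ^ 2 + vy t ^ 2)).
Proof.
  intros Ht Hpos Hcs Hc Dx Dy.
  set (h := fun s => (vy s * vx t - vx s * vy t) / (vx s * vx t + vy s * vy t)).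
  assert (Hg : vx t ^ 2 + vy t ^ 2 > 0) by (apply Hpos; lra).
  assert (Dh : is_derive h t ((vx t * dvy - vy t * dvx) / (vx t ^ 2 + vy t ^ 2))).
  { assert (Df : is_derive (fun s => vy s * vx t - vx s * vy t) t (dvy * vx t - dvx * vy t)).
    { apply (is_derive_minus' (fun s => vy s * vx t) (fun s => vx s * vy t)); apply dmulc; auto. }
    assert (Dg : is_derive (fun s => vx s * vx t + vy s * vy t) t (dvx * vx t + dvy * vy t)).
    { apply (is_derive_plus' (fun s => vx s * vx t) (fun s => vy s * vy t)); apply dmulc; auto. }
    assert (E := is_derive_div _ _ t _ _ Df Dg ltac:(simpl; nra)).
    eapply deq; [exact E|]. simpl. field. lra. }
  assert (Da : is_derive (fun s => alpha t + atan (h s)) t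
                  ((vx t * dvy - vy t * dvx) / (vx t ^ 2 + vy t ^ 2))).
  { assert (Dat : is_derive (fun s => atan (h s)) t (scal ((vx t * dvy - vy t * dvx) / (vx t ^ 2 + vy t ^ 2)) (/ (1 + h t ^ 2)))).
    { apply (is_derive_comp atan h). apply is_derive_Reals. apply derivable_pt_lim_atan.
      exact Dh. }
    assert (E := is_derive_plus' (fun _ => alpha t) (fun s => atan (h s)) t _ _ (is_derive_const (alpha t) t) Dat).
    eapply deq; [exact E|].
    unfold scal; simpl. unfold mult; simpl.
    assert (h t = 0). { unfold h. replace (vy t * vx t - vx t * vy t) with 0 by ring. unfold Rdiv. ring. }
    rewrite H. unfold zero; simpl. field. simpl in Hg. lra. }
  eapply is_derive_ext_loc; [| exact Da].
  apply continuity_pt_filterlim in Hc.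
  assert (P2 : 0 < PI / 2) by (generalize PI_RGT_0; lra).
  assert (L1 := Hc _ (locally_ball (alpha t) (mkposreal _ P2))).
  assert (L2 : locally t (fun s => a < s < b)).
  { apply (locally_interval _ t a b); simpl; try lra. intros; lra. }
  unfold filtermap in L1. generalize (filter_and _ _ L1 L2). apply filter_imp.
  intros s [Hb Hs]. simpl in Hb.
  change (Rabs (alpha s - alpha t) < PI/2) in Hb.
  apply Rabs_def2 in Hb.
  set (d := alpha s - alpha t).
  assert (Hd : atan (tan d) = d) by (apply atan_tan; unfold d; lra).
  assert (Hcd : 0 < cos d) by (apply cos_gt_0; unfold d; lra).
  assert (Htd : tan d = h s).
  { unfold tan.
    assert (Es : sin d = sin (alpha s) * cos (alpha t) - cos (alpha s) * sin (alpha t))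
      by (unfold d; apply sin_minus).
    assert (Ec : cos d = cos (alpha s) * cos (alpha t) + sin (alpha s) * sin (alpha t))
      by (unfold d; apply cos_minus).
    destruct (Hcs s Hs) as [c1 s1]. destruct (Hcs t Ht) as [c2 s2].
    rewrite c1, s1, c2, s2 in Es, Ec.
    assert (ns : 0 < sqrt (vx s ^ 2 + vy s ^ 2)) by (apply sqrt_lt_R0; apply Hpos; auto).
    assert (nt : 0 < sqrt (vx t ^ 2 + vy t ^ 2)) by (apply sqrt_lt_R0; auto).
    assert (K : vx s * vx t + vy s * vy t <> 0).
    { intro K0. rewrite Ec in Hcd.
      replace (vx s / sqrt (vx s ^ 2 + vy s ^ 2) * (vx t / sqrt (vx t ^ 2 + vy t ^ 2)) +
          vy s / sqrt (vx s ^ 2 + vy s ^ 2) * (vy t / sqrt (vx t ^ 2 + vy t ^ 2)))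
        with ((vx s * vx t + vy s * vy t) / (sqrt (vx s ^ 2 + vy s ^ 2) * sqrt (vx t ^ 2 + vy t ^ 2))) in Hcd
        by (field; lra).
      rewrite K0 in Hcd. unfold Rdiv in Hcd. lra. }
    rewrite Es, Ec. unfold h. field. repeat split; lra. }
  rewrite <- Htd, Hd. unfold d. lra.
Qed.

Theorem theorem2 (dx dy ox oy x0 y0 th0 Rr tmax : R) (phi : R) (alpha : R -> R) :
  0 < Rr -> 0 < tmax ->
  (forall t, 0 < t < tmax ->
     (anchor_x x0 th0 Rr dx dy t, anchor_y y0 th0 Rr dx dy t) <> (ox, oy)) ->
  let A := ox - x0 - Rr * sin th0 in
  let B := oy - y0 + Rr * cos th0 in
  let C := A * dx + B * Rr + B * dy in
  let D := A * Rr + A * dy - B * dx in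
  (C, D) <> (0, 0) ->
  cos phi = C / sqrt (C ^ 2 + D ^ 2) ->
  sin phi = D / sqrt (C ^ 2 + D ^ 2) ->
  ((forall t, 0 < t < tmax ->
      (A ^ 2 + B ^ 2) / sqrt (C ^ 2 + D ^ 2) > cos (t - th0 - phi)) \/
   (forall t, 0 < t < tmax ->
      (A ^ 2 + B ^ 2) / sqrt (C ^ 2 + D ^ 2) < cos (t - th0 - phi))) ->
  angle_branch (fun t => ox - anchor_x x0 th0 Rr dx dy t)
               (fun t => oy - anchor_y y0 th0 Rr dx dy t) alpha 0 tmax ->
  monotonic_on (fun t => alpha t - path_th th0 t) 0 tmax.
Proof.
  intros HR Htm Hne A B C D HCD Hcp Hsp Hcase Hbr.
  set (vx := VX ox x0 th0 Rr dx dy).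
  set (vy := VY oy y0 th0 Rr dx dy).
  set (S := sqrt (C ^ 2 + D ^ 2)).
  assert (HS : 0 < S).
  { apply sqrt_lt_R0. destruct (Req_dec C 0) as [h1|h1].
    - destruct (Req_dec D 0) as [h2|h2].
      + exfalso. apply HCD. rewrite h1, h2. reflexivity.
      + nra.
    - nra. }
  assert (Hpos : forall s, 0 < s < tmax -> vx s ^ 2 + vy s ^ 2 > 0).
  { intros s Hs. destruct (Rle_or_lt (vx s ^ 2 + vy s ^ 2) 0) as [h|h]; [|exact h].
    exfalso. apply (Hne s Hs).
    assert (e1 : vx s = 0) by nra. assert (e2 : vy s = 0) by nra.
    unfold vx, vy, VX, VY in e1, e2.
    f_equal; lra. }
  assert (Hcs : forall s, 0 < s < tmax ->
    cos (alpha s) = vx s / sqrt (vx s ^ 2 + vy s ^ 2) /\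
    sin (alpha s) = vy s / sqrt (vx s ^ 2 + vy s ^ 2)).
  { intros s Hs. destruct (Hbr s Hs) as [_ H]. exact H. }
  set (dP := fun t => (A * vx t + B * vy t) / (vx t ^ 2 + vy t ^ 2)).
  assert (Hder : forall t, 0 < t < tmax ->
            is_derive (fun t => alpha t - path_th th0 t) t (dP t)).
  { intros t Ht.
    assert (Da := der_alpha vx vy 0 tmax alpha t _ _ Ht Hpos Hcs (proj1 (Hbr t Ht))
                    (der_vx ox oy x0 y0 th0 Rr dx dy t) (der_vy ox oy x0 y0 th0 Rr dx dy t)).
    assert (Dp : is_derive (fun t => path_th th0 t) t (-1)).
    { unfold path_th. auto_derive; auto. }
    assert (E := is_derive_minus' _ _ t _ _ Da Dp).
    eapply deq; [exact E|]. unfold dP.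
    fold vx vy. fold A B.
    assert (Hp := Hpos t Ht). field. lra. }
  assert (Hid : forall t, A * vx t + B * vy t = A ^ 2 + B ^ 2 - S * cos (t - th0 - phi)).
  { intro t.
    replace (t - th0 - phi) with ((- (th0 - t)) - phi) by ring.
    rewrite cos_minus, cos_neg, sin_neg.
    replace (S * (cos (th0 - t) * cos phi + - sin (th0 - t) * sin phi))
      with (cos (th0 - t) * (S * cos phi) - sin (th0 - t) * (S * sin phi)) by ring.
    rewrite Hcp, Hsp. fold S.
    replace (S * (C / S)) with C by (field; lra).
    replace (S * (D / S)) with D by (field; lra).
    unfold vx, vy, VX, VY, anchor_x, anchor_y, path_x, path_y, path_th, C, D, A, B.
    ring. }
  destruct Hcase as [Hc|Hc].
  - left. intros s t Hs Hst Ht. destruct Hst as [lt|eq]; [|subst; lra].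
    apply Rlt_le. apply (incr_function (fun t => alpha t - path_th th0 t) 0 tmax dP); [| |simpl; lra|lra|simpl; lra].
    + intros x H1 H2. simpl in H1, H2. apply Hder; lra.
    + intros x H1 H2. simpl in H1, H2. unfold dP. apply Rdiv_lt_0_compat; [|apply Hpos; lra].
      rewrite Hid. specialize (Hc x (conj H1 H2)). fold S in Hc.
      apply Rmult_gt_compat_r with (r := S) in Hc; [|lra].
      unfold Rdiv in Hc. rewrite Rmult_assoc, Rinv_l in Hc by lra. lra.
  - right. intros s t Hs Hst Ht. destruct Hst as [lt|eq]; [|subst; lra].
    apply Rlt_le.
    cut ((fun t => - (alpha t - path_th th0 t)) s < (fun t => - (alpha t - path_th th0 t)) t).
    { simpl. lra. }
    apply (incr_function (fun t => - (alpha t - path_th th0 t)) 0 tmax (fun t => - dP t)); [| |simpl; lra|lra|simpl; lra].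
    + intros x H1 H2. simpl in H1, H2. apply (is_derive_opp (fun t => alpha t - path_th th0 t)). apply Hder; lra.
    + intros x H1 H2. simpl in H1, H2. unfold dP.
      assert (0 < vx x ^ 2 + vy x ^ 2) by (apply Hpos; lra).
      assert (A * vx x + B * vy x < 0).
      { rewrite Hid. specialize (Hc x (conj H1 H2)). fold S in Hc.
        apply Rmult_lt_compat_r with (r := S) in Hc; [|lra].
        unfold Rdiv in Hc. rewrite Rmult_assoc, Rinv_l in Hc by lra. lra. }
      assert ((A * vx x + B * vy x) / (vx x ^ 2 + vy x ^ 2) < 0).
      { apply Ropp_lt_cancel. rewrite Ropp_0. unfold Rdiv. rewrite Ropp_mult_distr_l.
        apply Rmult_lt_0_compat; [lra| apply Rinv_0_lt_compat; lra]. }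
      lra.
Qed.
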